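(* Let $V$ be a finite set, $f:2^V\to\mathbb{R}_+$ nonnegative submodular, $t_1,\ldots,t_k\in V$ distinct terminals, and $\mathbf{x}=(x_{i,j})_{i\in[k],j\in V}$ with $x_{i,j}\ge0$, $\sum_{i=1}^k x_{i,j}=1$ for all $j$, and $x_{i,t_i}=1$ for all $i$. For $\theta\in[0,1]$ define $A_i(\theta)=\{j: x_{i,j}>\theta\}$, $U(\theta)=\{j:\max_i x_{i,j}\le\theta\}$ and $B(\theta)=\{j: 1-\max_i x_{i,j}\ge\theta\}$. Consider the rounding which picks $\theta\in(\tfrac12,1]$ uniformly and $i'\in[k]$ uniformly at random (independently), and assigns $A_i(\theta)$ to terminal $i$ for $i\ne i'$ and $A_{i'}(\theta)\cup U(\theta)$ to terminal $i'$. Then the expected cost $\mathbb{E}[\sum_i f(S_i)]$ of the resulting partition $(S_1,\ldots,S_k)$ equals $$\Big(2-\frac{2}{k}\Big)\sum_{i=1}^k\int_{1/2}^1 f(A_i(\theta))\,d\theta+\frac{2}{k}\sum_{i=1}^k\int_0^{1/2} f(A_i(\theta)\cup B(\theta))\,d\theta.$$ *)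

(* Defs.v *)
From HB Require Import structures.
From mathcomp Require Import all_boot all_order all_algebra.
From mathcomp Require Import all_classical all_reals all_analysis.
Set Implicit Arguments. Unset Strict Implicit. Unset Printing Implicit Defensive.
Import Order.TTheory GRing.Theory Num.Theory.
Import numFieldNormedType.Exports.
Local Open Scope ring_scope.

Section Defs.
Context {R : realType} {V : finType} {k : nat}.
Implicit Types (x : 'I_k -> V -> R) (f : {set V} -> R) (theta : R).

Definition nonneg_setfun f := forall S : {set V}, 0 <= f S.
Definition submodular f :=
  forall S T : {set V}, f (S :|: T) + f (S :&: T) <= f S + f T.

Definition feasible_x (t : 'I_k -> V) x :=
  [/\ forall i j, 0 <= x i j,
      forall j, \sum_(i < k) x i j = 1 &
      forall i, x i (t i) = 1].

(* max_i x_{i,j} (x is nonnegative, so the initial value 0 is harmless) *)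
Definition xmax x (j : V) : R := \big[Num.max/0]_(i < k) x i j.

Definition A_set x (i : 'I_k) theta : {set V} := [set j | theta < x i j].
Definition U_set x theta : {set V} := [set j | xmax x j <= theta].
Definition B_set x theta : {set V} := [set j | theta <= 1 - xmax x j].

Definition S_set x theta (i' i : 'I_k) : {set V} :=
  if i == i' then A_set x i theta :|: U_set x theta else A_set x i theta.

Definition round_cost f x theta (i' : 'I_k) : R :=
  \sum_(i < k) f (S_set x theta i' i).

(* Expectation when theta ~ Uniform(1/2, 1] (density 2) and i' ~ Uniform([k]),
   independently. *)
Definition expected_cost f x : R :=
  \sum_(i' < k) k%:R^-1 *
     (\int[@lebesgue_measure R]_(theta in `]2^-1, 1]%classic)
        (2 * round_cost f x theta i')).

End Defs.

(* Main.v *)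
Require Import Defs.
From HB Require Import structures.
From mathcomp Require Import all_boot all_order all_algebra.
From mathcomp Require Import all_classical all_reals all_analysis.
From mathcomp Require Import ring lra.
Import Order.TTheory GRing.Theory Num.Theory.
Import numFieldNormedType.Exports.
Local Open Scope ring_scope.
Local Open Scope classical_set_scope.
Section Step.
Context {R : realType} {V : finType}.
Notation mu := (@lebesgue_measure R).

Lemma step_measurable (D : set R) (G : R -> {set V}) (F : {set V} -> R) :
  (forall j, measurable [set t | j \in G t]) ->
  measurable_fun D (fun t => F (G t)).
Proof.
move=> mG mD Y mY.
have -> : (fun t => F (G t)) @^-1` Y =
  \bigcup_(S in [set S | Y (F S)]) [set t | G t = S].
  apply/seteqP; split => t /=.
    by move=> Yt; exists (G t).
  by case=> S /= YS GS; rewrite GS.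
apply: measurableI => //; apply: fin_bigcup_measurable; first exact: finite_finset.
move=> S _.
have -> : [set t | G t = S] =
  \bigcap_(j in [set: V]) [set t | (j \in G t) = (j \in S)].
  apply/seteqP; split => t /=.
    by move=> GS j _; rewrite /= (GS : G t = S).
  by move=> h; apply/setP => j; exact: h.
apply: fin_bigcap_measurable; first exact: finite_finset.
move=> j _; case: (boolP (j \in S)) => jS.
  by rewrite (_ : [set t | _ = true] = [set t | j \in G t]) //;
    apply/seteqP; split => t /=.
rewrite (_ : [set t | _ = false] = ~` [set t | j \in G t]);
  first exact: measurableC.
by apply/seteqP; split => t /=; case: (j \in G t).
Qed.

Lemma step_integrable (D : set R) (G : R -> {set V}) (F : {set V} -> R) :
  measurable D -> (mu D < +oo)%E ->
  (forall j, measurable [set t | j \in G t]) ->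
  mu.-integrable D (EFin \o (fun t => F (G t))).
Proof.
move=> mD Dfin mG; apply: measurable_bounded_integrable => //.
  exact: step_measurable.
exists (\sum_S `|F S|); split; first by rewrite num_real.
move=> M hM t _ /=; apply: ltW; apply: le_lt_trans hM.
rewrite (bigD1 (G t)) //= ler_wpDr // sumr_ge0 //.
Qed.

End Step.
Section Refl.
Context {R : realType}.
Notation mu := (@lebesgue_measure R).

Let phi (t : R) : R := 1 - t.

Let mphi : measurable_fun [set: R] phi.
Proof.
rewrite (_ : phi = (cst 1 \- id)) //.
apply: measurable_realfun.measurable_funB; [exact: measurable_cst | exact: measurable_id].
Qed.

Lemma pf_leb A : measurable A ->
  pushforward mu (phi : _ -> measurableTypeR R) A = mu A.
Proof.
move=> mA; apply/esym/lebesgue_measure_unique => //= _ [[a b]] _ <-.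
rewrite /pushforward.
have -> : phi @^-1` `]a, b] = `[1 - b, 1 - a[.
  apply/seteqP; split => t /=; rewrite /phi !in_itv /=.
    by move=> /andP[h1 h2]; apply/andP; split; rewrite ?lerBlDr ?ltrBrDr; lra.
  by move=> /andP[h1 h2]; apply/andP; split; lra.
rewrite !lebesgue_measure_itv /=.
rewrite !lte_fin; have -> : (1 - b < 1 - a) = (a < b) by rewrite ltrD2l ltrN2.
by case: ifP => // _; rewrite -!EFinD; congr EFin; lra.
Qed.

Lemma refl_int (g : R -> R) : (forall t, 0 <= g t) ->
  measurable_fun (`[0, 2^-1] : set R) g ->
  \int[mu]_(t in `[0, 2^-1]) g t = \int[mu]_(t in `[2^-1, 1]) g (1 - t).
Proof.
move=> g0 mg; rewrite /Rintegral; congr fine.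
have -> : `[2^-1, 1] = (phi : _ -> measurableTypeR R) @^-1` `[0, 2^-1].
  apply/seteqP; split => t /=; rewrite /phi !in_itv /=;
    by move=> /andP[h1 h2]; apply/andP; split; lra.
transitivity (\int[pushforward mu (phi : _ -> measurableTypeR R)]_(y in (`[0%R, (2^-1)%R] : set R)) (g y)%:E)%E.
  apply/esym/eq_measure_integral => //= A mA _.
  by rewrite pf_leb.
rewrite ge0_integral_pushforward //.
- exact/measurable_realfun.measurable_EFinP.
- by move=> y _; rewrite lee_fin.
Qed.

End Refl.
Section Sum.
Context {R : realType}.
Notation mu := (@lebesgue_measure R).

Lemma Rint_sum (D : set R) (I : Type) (s : seq I) (h : I -> R -> R) :
  measurable D -> (forall i, mu.-integrable D (EFin \o h i)) ->
  mu.-integrable D (EFin \o (fun t => \sum_(i <- s) h i t)) /\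
  \int[mu]_(t in D) (\sum_(i <- s) h i t) = \sum_(i <- s) \int[mu]_(t in D) h i t.
Proof.
move=> mD hi; elim: s => [|i s [IHi IHe]].
  rewrite big_nil; under eq_fun do rewrite big_nil.
  split.
    exact: (integrable0 mu D).
  by rewrite /Rintegral integral0.
rewrite big_cons; under eq_fun do rewrite big_cons.
have -> : (EFin \o (fun t => h i t + \sum_(j <- s) h j t)) =
   ((EFin \o h i) \+ (EFin \o (fun t => (\sum_(j <- s) h j t)%R)))%E by [].
split; first exact: integrableD.
rewrite -IHe -RintegralD //.
Qed.

Lemma itv_fin (a b : R) (ba bb : bool) :
  (mu [set` Interval (BSide ba a) (BSide bb b)] < +oo)%E.
Proof. by rewrite lebesgue_measure_itv /=; case: ifP => _; rewrite ?ltry. Qed.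

End Sum.
Section Sets.
Context {R : realType} {V : finType} {k : nat}.
Variable x : 'I_k -> V -> R.

Lemma xmax_ge i j : x i j <= xmax x j.
Proof. exact: le_bigmax. Qed.

Lemma xmax_gt (th : R) j : 0 <= th -> th < xmax x j -> exists l, th < x l j.
Proof.
move=> th0; rewrite /xmax; elim/big_ind: _ => //.
- by move=> h; exfalso; lra.
- by move=> a b ha hb; rewrite lt_max => /orP[/ha|/hb].
- by move=> l _ h; exists l.
Qed.

Lemma mA i j : measurable [set t : R | j \in A_set x i t].
Proof.
rewrite (_ : [set t : R | j \in A_set x i t] = `]-oo, x i j[); first exact: measurable_itv.
by apply/seteqP; split => t /=; rewrite /A_set inE in_itv /=.
Qed.

Lemma mU j : measurable [set t : R | j \in U_set x t].
Proof.
rewrite (_ : [set t : R | j \in U_set x t] = `[xmax x j, +oo[); first exact: measurable_itv.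
by apply/seteqP; split => t /=; rewrite /U_set inE in_itv /= andbT.
Qed.

Lemma mB j : measurable [set t : R | j \in B_set x t].
Proof.
rewrite (_ : [set t : R | j \in B_set x t] = `]-oo, 1 - xmax x j]); first exact: measurable_itv.
by apply/seteqP; split => t /=; rewrite /B_set inE in_itv /=.
Qed.

Lemma mUnion (G1 G2 : R -> {set V}) j :
  measurable [set t | j \in G1 t] -> measurable [set t | j \in G2 t] ->
  measurable [set t | j \in G1 t :|: G2 t].
Proof.
move=> m1 m2; rewrite (_ : [set t | j \in G1 t :|: G2 t] = [set t | j \in G1 t] `|` [set t | j \in G2 t]).
  exact: measurableU.
by apply/seteqP; split => t /=; rewrite finset.in_setU; [move/orP | case=> ->; rewrite ?orbT].
Qed.

Lemma key_set (t : 'I_k -> V) i th : feasible_x t x -> 2^-1 <= th ->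
  A_set x i (1 - th) :|: B_set x (1 - th) = A_set x i th :|: U_set x th.
Proof.
case=> x0 xs _ hth; apply/setP => j; rewrite !inE.
have -> : (1 - th <= 1 - xmax x j) = (xmax x j <= th) by rewrite lerD2l lerN2.
case: (leP (xmax x j) th) => hm; rewrite ?orbT ?orbF //.
apply/idP/idP => h; last by lra.
have th0 : 0 <= th by lra.
have [l hl] := xmax_gt th j th0 hm.
case: (eqVneq l i) => [<- //|li].
rewrite ltNge; apply/negP => hij.
have : x i j + x l j <= 1.
  rewrite -(xs j) (bigD1 i) //= lerD2l (bigD1 l) //= ler_wpDr //.
  by rewrite sumr_ge0.
lra.
Qed.

End Sets.

Theorem lemma2 (R : realType) (V : finType) (k : nat)
  (f : {set V} -> R) (t : 'I_k -> V) (x : 'I_k -> V -> R) :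
  nonneg_setfun f -> submodular f -> injective t -> feasible_x t x ->
  expected_cost f x =
    (2 - 2 / k%:R) *
      \sum_(i < k) (\int[@lebesgue_measure R]_(theta in `[2^-1, 1]%classic)
                      f (A_set x i theta))
    + 2 / k%:R *
      \sum_(i < k) (\int[@lebesgue_measure R]_(theta in `[0, 2^-1]%classic)
                      f (A_set x i theta :|: B_set x theta)).
Proof.
move=> f0 _ _ hx.
pose mu := @lebesgue_measure R.
pose I1 : set R := `]2^-1, 1].
have mI1 : measurable I1 by exact: measurable_itv.
have fI1 : (mu I1 < +oo)%E by exact: itv_fin.
pose Ai i := \int[mu]_(t in `]2^-1, 1]) f (A_set x i t).
pose Ui i := \int[mu]_(t in `]2^-1, 1]) f (A_set x i t :|: U_set x t).
have step1 : forall i', \int[mu]_(t in `]2^-1, 1]) (2 * round_cost f x t i') =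
    2 * (\sum_i Ai i - Ai i' + Ui i').
  move=> i'.
  have iS : forall i, mu.-integrable I1
      (EFin \o (fun t => f (S_set x t i' i))).
    move=> i; apply: step_integrable => // j; rewrite /S_set.
    case: (i == i'); last exact: mA.
    by apply: mUnion; [exact: mA | exact: mU].
  have [isum esum] := @Rint_sum R I1 'I_k (index_enum 'I_k) _ mI1 iS.
  rewrite RintegralZl //; congr (2 * _).
  rewrite /round_cost esum.
  rewrite (bigD1 i') //= [in RHS](bigD1 i') //= /S_set eqxx.
  rewrite [Ai i' + _]addrC addrK [RHS]addrC; congr (_ + _).
  by apply: eq_bigr => i /negbTE ->.
have eA : forall i, Ai i =
    \int[mu]_(t in `[2^-1, 1]) f (A_set x i t).
  move=> i; apply: Rintegral_itv_obnd_cbnd.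
  by apply: step_integrable => // j; exact: mA.
have eU : forall i, Ui i =
    \int[mu]_(t in `[0, 2^-1]) f (A_set x i t :|: B_set x t).
  move=> i; rewrite /Ui Rintegral_itv_obnd_cbnd; last first.
    apply: step_integrable => // j.
    by apply: mUnion; [exact: mA | exact: mU].
  rewrite refl_int //; last first.
    by apply: step_measurable => j; apply: mUnion; [exact: mA | exact: mB].
  apply: eq_Rintegral => th; rewrite inE /= in_itv /= => /andP[h1 h2].
  by rewrite (key_set x t i th hx h1).
rewrite /expected_cost; under eq_bigr do rewrite step1.
under [X in _ = _ * X + _]eq_bigr do rewrite -eA.
under [X in _ = _ + _ * X]eq_bigr do rewrite -eU.
rewrite -!mulr_sumr !big_split /= sumrN sumr_const card_ord.
set SA := \sum_i Ai i; set SU := \sum_i Ui i.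
case: (posnP k) => [k0|kpos].
  have SA0 : SA = 0.
    apply: big1 => i _; exfalso; move: (ltn_ord i).
    by move: (nat_of_ord i) => n; rewrite k0.
  by rewrite SA0 k0 invr0 mul0r; ring.
have kn0 : k%:R != 0 :> R by rewrite pnatr_eq0 -lt0n.
rewrite -mulr_natl; field.
by [].
Qed.
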